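(* Suppose Assumption (A2) holds and, in addition, $B$ is $\mu$-strongly monotone w.r.t. $S$ for some $\mu>0$ (i.e. $\langle Bx-By,x-y\rangle\ge\mu\|x-y\|_S^2$ for all $x,y$); let $x^*$ be the solution of $0\in Ax+Bx+Cx$. Let $p\in(0,1)$, $\lambda=1-p$, $L\ge\frac{3-p}{2}$, $\varepsilon_3>0$, $\alpha>0$, and suppose $L_k+\alpha\le\frac{1-\sqrt p}{4}$ for all $k$. Let $\bar L=\sup_kL_k$ and $\gamma=\min\{\frac{\sqrt p}{2\theta},\frac p\beta,\frac{\alpha}{\bar L\theta}\}$ (with $\frac{\alpha}{0}=+\infty$). For $k\ge1$ let $$c_k=\min\Big\{\frac{\gamma\mu}{1+\frac{L_k}{2L\varepsilon_3}},\ \frac{2L\big(1-p-L_{k-1}-\alpha-(1-p)(\alpha+L_k)\big)}{(1-p)L_k(\varepsilon_3+1)},\ \frac{Lp\big(1-\sqrt p-4(L_k+\alpha)\big)}{2(1-p)(4+p)+2pL_k(\varepsilon_3+1)}\Big\}$$ (the middle term read as $+\infty$ if $L_k=0$), and let $c$ be any real number with $0\le c\le c_k$ for all $k\ge1$. Then the sequences generated by Algorithm SVR-NFBHF-M (with this $\lambda,p,\gamma$) satisfy, for all $k\ge1$, $$(1-p-L_k)\,\mathbb E\|x_{k+1}-x^*\|_S^2\le\frac{\mathbb E\big[(1-p)\|x_1-x^*\|_S^2+\|\omega_1-x^*\|_S^2+d_1\big]}{(1+c/(2L))^k},$$ where $d_1=2\langle u_1,x_1-x^*\rangle+L_0\|y_0-\bar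 x_0\|_S^2$.
   Context: $\mathcal X$ is a separable real Hilbert space with Borel $\sigma$-algebra; all random variables live on a probability space $(\Omega,\mathcal F,P)$; $\mathbb E$ is (full) expectation. $\mathcal P(\mathcal X)$ is the set of bounded linear self-adjoint strongly positive operators $S$ ($\langle Sx,x\rangle\ge m\|x\|^2$, $m>0$); $\langle x,y\rangle_S=\langle Sx,y\rangle$, $\|x\|_S=\sqrt{\langle Sx,x\rangle}$. For $S\in\mathcal P(\mathcal X)$, $T$ is $L$-Lipschitz w.r.t. $S$ if $\|Tx-Ty\|_{S^{-1}}\le L\|x-y\|_S$, and $\beta^{-1}$-cocoercive w.r.t. $S$ if $\langle Tx-Ty,x-y\rangle\ge\beta^{-1}\|Tx-Ty\|_{S^{-1}}^2$. Assumption (A2): fix $S\in\mathcal P(\mathcal X)$. (i) $A:\mathcal X\to2^{\mathcal X}$ is maximally monotone; (ii) $B=\sum_{i=1}^NB_i$ where each $B_i:\mathcal X\to\mathcal X$ is monotone and Lipschitz; $Q$ is a probability distribution on $\{1,\dots,N\}$ and $B_\xi:\mathcal X\to\mathcal X$ ($\xi\in\{1,\dots,N\}$) are operators (stochastic oracle) with $\mathbb E_{\xi\sim Q}[B_\xi(x)]=B(x)$ for all $x$ and $\mathbb E_{\xi\sim Q}\|B_\xi u-B_\xi v\|_{S^{-1}}^2\le\theta^2\|u-v\|_S^2$ for all $u,v$, some $\theta>0$; (iii) $C:\mathcal X\to\mathcal X$ is $\beta^{-1}$-cocoercive w.r.t. $S$, $\beta>0$; (iv) the solution set $\Omega^*=\{x:0\in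 Ax+Bx+Cx\}$ is nonempty; (v) $\gamma>0$ and for each $k$, $M_k:\mathcal X\to\mathcal X$ is an operator such that $\gamma M_k-S$ is $L_k$-Lipschitz w.r.t. $S$ with $L_k\in[0,1)$ (so $(M_k+A)^{-1}$ is single-valued with full domain). Algorithm SVR-NFBHF-M: parameters $p\in(0,1]$, $\lambda\ge0$; initial $x_0,u_0\in\mathcal X$, $\omega_0=x_0$. For $k=0,1,\dots$: $\bar x_k=\lambda x_k+(1-\lambda)\omega_k$; $y_k=(M_k+A)^{-1}\big(M_k\bar x_k-(B+C)\omega_k+\gamma^{-1}u_k\big)$; $u_{k+1}=(\gamma M_k-S)y_k-(\gamma M_k-S)\bar x_k$; draw $\xi_k\sim Q$ independently of the past; $x_{k+1}=y_k-\gamma S^{-1}B_{\xi_k}y_k+\gamma S^{-1}B_{\xi_k}\omega_k$; $\omega_{k+1}=x_{k+1}$ with probability $p$ and $\omega_{k+1}=\omega_k$ with probability $1-p$ (independent coin). *)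

(* Defs.v *)
From mathcomp Require Import all_boot all_order all_algebra.
From mathcomp Require Import reals.
Set Implicit Arguments. Unset Strict Implicit. Unset Printing Implicit Defensive.
Import Order.TTheory GRing.Theory Num.Theory.
Local Open Scope ring_scope.

Section Defs.
Variables (R : realType) (X : lmodType R) (ip : X -> X -> R).

Definition hnorm (x : X) : R := Num.sqrt (ip x x).

Definition separable_hilbert : Prop :=
  [/\ (forall x y, ip x y = ip y x),
      (forall a x y z, ip (a *: x + y) z = a * ip x z + ip y z),
      (forall x, 0 <= ip x x),
      (forall x, ip x x = 0 -> x = 0) /\
      (forall u : nat -> X,
         (forall e, 0 < e -> exists n0, forall m n, (n0 <= m)%N -> (n0 <= n)%N ->
             hnorm (u m - u n) < e) ->
         exists l, forall e, 0 < e -> exists n0, forall n, (n0 <= n)%N ->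
             hnorm (u n - l) < e)
    &
      exists d : nat -> X, forall x e, 0 < e -> exists n, hnorm (x - d n) < e].

Definition strongly_pos_op (S : X -> X) : Prop :=
  [/\ (forall a x y, S (a *: x + y) = a *: S x + S y),
      (exists M, forall x, hnorm (S x) <= M * hnorm x),
      (forall x y, ip (S x) y = ip x (S y))
    & exists m, 0 < m /\ forall x, m * ip x x <= ip (S x) x].

Definition normS (S : X -> X) (x : X) : R := Num.sqrt (ip (S x) x).

Definition lipschitz_wrt (S Sinv : X -> X) (T : X -> X) (Lc : R) : Prop :=
  forall x y, normS Sinv (T x - T y) <= Lc * normS S (x - y).

Definition cocoercive_wrt (S Sinv : X -> X) (T : X -> X) (beta : R) : Prop :=
  forall x y, beta^-1 * (normS Sinv (T x - T y)) ^+ 2 <= ip (T x - T y) (x - y).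

Definition strongly_monotone_wrt (S : X -> X) (T : X -> X) (mu : R) : Prop :=
  forall x y, mu * (normS S (x - y)) ^+ 2 <= ip (T x - T y) (x - y).

Definition monotone_op (T : X -> X) : Prop :=
  forall x y, 0 <= ip (T x - T y) (x - y).

Definition lipschitz_op (T : X -> X) : Prop :=
  exists Lc, 0 <= Lc /\ forall x y, hnorm (T x - T y) <= Lc * hnorm (x - y).

(* set-valued operators A : X -> 2^X, encoded as relations: A x u <-> u \in A x *)
Definition monotone_set_op (A : X -> X -> Prop) : Prop :=
  forall x y u v, A x u -> A y v -> 0 <= ip (u - v) (x - y).

Definition maximally_monotone (A : X -> X -> Prop) : Prop :=
  monotone_set_op A /\
  forall A' : X -> X -> Prop, monotone_set_op A' ->
    (forall x u, A x u -> A' x u) -> forall x u, A' x u -> A x u.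

End Defs.

(* The step size gamma = min { sqrt p / (2 theta), p / beta, alpha / (Lbar theta) },
   where alpha / 0 = +oo. *)
Definition gamma_def (R : realType) (p theta beta alpha Lbar : R) : R :=
  let g := Num.min (Num.sqrt p / (2 * theta)) (p / beta) in
  if Lbar == 0 then g else Num.min g (alpha / (Lbar * theta)).

(* c <= c_k, where c_k is the minimum of three terms, the middle one being
   +oo when L_k = 0. Here Lk = L_k, Lkm1 = L_{k-1}. *)
Definition le_ck (R : realType) (c gamma mu L eps3 alpha p Lk Lkm1 : R) : Prop :=
  [/\ c <= gamma * mu / (1 + Lk / (2 * L * eps3)),
      (Lk != 0 -> c <= 2 * L * (1 - p - Lkm1 - alpha - (1 - p) * (alpha + Lk))
                        / ((1 - p) * Lk * (eps3 + 1)))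
    & c <= L * p * (1 - Num.sqrt p - 4 * (Lk + alpha))
           / (2 * (1 - p) * (4 + p) + 2 * p * Lk * (eps3 + 1))].

(* Canonical discrete model of the randomness of SVR-NFBHF-M: the history up
   to iteration k is the sequence of pairs (xi_j, coin_j), j < k, where
   xi_j ~ Q and coin_j ~ Bernoulli(p), all independent. *)
Definition hist_weight (R : realType) (N : nat) (Q : 'I_N -> R) (p : R)
  (h : seq ('I_N * bool)) : R :=
  \prod_(a <- h) (Q a.1 * (if a.2 then p else 1 - p)).

Definition expect (R : realType) (N : nat) (Q : 'I_N -> R) (p : R) (k : nat)
  (f : seq ('I_N * bool) -> R) : R :=
  \sum_(t : k.-tuple ('I_N * bool)) hist_weight Q p t * f t.

(* Main.v *)
Require Import Defs.
From mathcomp Require Import all_boot all_order all_algebra.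
From mathcomp Require Import reals.
From mathcomp Require Import ring lra.
Import Order.TTheory GRing.Theory Num.Theory.
Local Open Scope ring_scope.



Lemma poly_s (R : realType) (s : R) : 0 <= s <= 1 ->
  (1 - s) / 8 + 9 * s ^+ 2 / 256 + s ^+ 2 * (1 - s) / 2 + s ^+ 2 * (1 - s) ^+ 2 <= 1 / 4.
Proof.
move=> /andP[s0 s1].
have h1 : 0 <= s * (1 - s) by rewrite mulr_ge0 // subr_ge0.
have h0 := sqr_ge0 (s - 1/2).
have h2 : s * (1 - s) <= 1/4 by rewrite expr2 in h0; lra.
have h3 : (s * (1 - s)) ^+ 2 <= s * (1 - s) / 4.
  have := mulr_ge0 h1 (_ : 0 <= 1/4 - s * (1 - s)); rewrite expr2.
  move=> H; have {}H := H ltac:(lra). lra.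
have h4 : s ^+ 2 * (1 - s) ^+ 2 = (s * (1 - s)) ^+ 2 by rewrite exprMn.
rewrite h4.
have h5 : 0 <= s * (1 - s) * (1 - s) by rewrite mulr_ge0 //; lra.
have h6 : 0 <= s * s * (1 - s) by rewrite !mulr_ge0 //; lra.
rewrite !expr2 in h3 *.
nra.
Qed.

Lemma master (R : realType) (p s l l' k e3 al : R) :
  0 < s -> s < 1 -> p = s ^+ 2 ->
  0 <= l -> l <= (1 - s) / 4 -> 0 <= l' -> 0 <= al -> l' + al <= (1 - s) / 4 ->
  0 <= k -> 0 < e3 ->
  4 * k * (1 - p) * (4 + p) + 4 * p * k * l' * (1 + e3) <= p * (1 - s - 4 * (l' + al)) ->
  let E := 2 * l' + k * (2 + e3) * l' in
  let Q := 3 * p / 4 + p * l' / 4 + k * (p / 2 + p * l' / 4 + 2 * (1 - p)) in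
  let c1 := (1 - p) - l - E * (1 - p) ^+ 2 in
  let c2 := p - Q - E * p ^+ 2 in
  let c12 := - (E * p * (1 - p)) in
  0 < c1 /\ c12 ^+ 2 <= c1 * c2.
Proof.
move=> s0 s1 ps l0 ll l'0 al0 hl' k0 e0 T3 E Q c1 c2 c12.
have p0 : 0 < p by rewrite ps exprn_gt0.
have p1 : p < 1 by rewrite ps; nra.
have ps1 : p <= s by rewrite ps; nra.
set w := k * l' * (1 + e3).
have w0 : 0 <= w by rewrite /w !mulr_ge0 //; lra.
have kE : k * (2 + e3) * l' <= 2 * w.
  rewrite /w; have : 0 <= k * l' by rewrite mulr_ge0.
  move=> h; have -> : k * (2 + e3) * l' = (k * l') * (2 + e3) by ring.
  have -> : 2 * (k * l' * (1 + e3)) = (k * l') * (2 + 2 * e3) by ring.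
  by rewrite ler_wpM2l //; lra.
have kE0 : 0 <= k * (2 + e3) * l' by rewrite !mulr_ge0 //; lra.
set m := 1 - s - 4 * (l' + al).
set r := m - 4 * w.
have A1 : 0 <= k * (1 - p) by rewrite mulr_ge0 //; lra.
have A2 : 16 * (k * (1 - p)) <= 4 * k * (1 - p) * (4 + p).
  have -> : 4 * k * (1 - p) * (4 + p) = (k * (1 - p)) * (16 + 4 * p) by ring.
  rewrite mulrC ler_wpM2l //; lra.
have T3' : 4 * k * (1 - p) * (4 + p) + 4 * p * w <= p * m.
  by move: T3; rewrite /w /m; have -> : 4 * p * k * l' * (1 + e3) = 4 * p * (k * l' * (1 + e3)) by ring.
have Hr : 16 * (k * (1 - p)) <= p * r.
  rewrite /r; have -> : p * (m - 4 * w) = p * m - 4 * p * w by ring. lra.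
have r0 : 0 <= r.
  have : 0 <= p * r by lra.
  by rewrite pmulr_rge0.
have rm : r <= 1 - s - 4 * l' by rewrite /r /m; lra.
have Eu : E <= (1 - s - r) / 2 by rewrite /E /r /m; lra.
have E0 : 0 <= E by rewrite /E; lra.
have kp : k <= p / 16.
  have h : 16 * (k * (1 - p)) <= p * (1 - p).
    apply: le_trans Hr _; rewrite ler_wpM2l //; lra.
  have h' : 0 <= (p / 16 - k) * (1 - p) by lra.
  move: h'; rewrite pmulr_lge0 ?subr_gt0 //; lra.
have c1ge : (1 - p) / 4 <= c1.
  rewrite /c1.
  have : E * (1 - p) ^+ 2 <= (1 - p) / 2.
    have h1 : (1 - p) ^+ 2 <= 1 - p by rewrite expr2; nra.
    have h2 : E <= 1/2 by lra.
    nra.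
  lra.
split; first by lra.
have l'u : l' <= (1 - s - r) / 4 by lra.
have c2ge : 4 * E ^+ 2 * p ^+ 2 * (1 - p) <= c2.
  rewrite /c2 /Q.
  have q1 : k * (p / 2 + p * l' / 4) <= 9 * p ^+ 2 / 256.
    have : p / 2 + p * l' / 4 <= 9 * p / 16 by nra.
    move=> h; have hh : 0 <= p / 2 + p * l' / 4 by nra.
    have : k * (p / 2 + p * l' / 4) <= p / 16 * (9 * p / 16).
      apply: le_trans (ler_wpM2l k0 h) _. by rewrite ler_wpM2r //; nra.
    by move=> h'; apply: le_trans h' _; rewrite expr2; lra.
  have q2 : k * (2 * (1 - p)) <= p * r / 8 by lra.
  have q3 : E * p ^+ 2 <= p ^+ 2 * (1 - s - r) / 2.
    by rewrite mulrC -mulrA ler_wpM2l ?sqr_ge0 //; lra.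
  have q4 : E ^+ 2 <= (1 - s - r) ^+ 2 / 4.
    have h : 0 <= 1 - s - r by lra.
    have : E ^+ 2 <= ((1 - s - r) / 2) ^+ 2 by rewrite ler_pXn2r // ?nnegrE //; lra.
    by rewrite expr_div_n; have -> : (2:R) ^+ 2 = 4 by rewrite expr2; lra.
  have q5 : (1 - s - r) ^+ 2 <= (1 - s) ^+ 2.
    by rewrite ler_pXn2r // ?nnegrE //; lra.
  have q6 : 4 * E ^+ 2 * p ^+ 2 * (1 - p) <= p ^+ 2 * (1 - s) ^+ 2.
    have h : 0 <= p ^+ 2 * (1 - p) by rewrite mulr_ge0 ?sqr_ge0 //; lra.
    have : 4 * E ^+ 2 <= 1 by nra.
    have h3 : p ^+ 2 * (1 - s) ^+ 2 = p ^+ 2 * (1 - s) ^+ 2 by [].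
    nra.
  have q7 : p ^+ 2 * (1 - s - r) <= p ^+ 2 * (1 - s).
    by rewrite ler_wpM2l ?sqr_ge0 //; lra.
  have P := @poly_s R s ltac:(apply/andP; split; lra).
  have key : p * ((1 - s) / 8 + 9 * p / 256 + p * (1 - s) / 2 + p * (1 - s) ^+ 2) <= p / 4.
    have key0 : (1 - s) / 8 + 9 * p / 256 + p * (1 - s) / 2 + p * (1 - s) ^+ 2 <= 1 / 4.
      by rewrite ps.
    have := ler_wpM2l (ltW p0) key0; lra.
  have e1 : p * l' / 4 + p * r / 8 <= p * (1 - s) / 8.
    have : l' / 4 + r / 8 <= (1 - s) / 8 by lra.
    move=> h; have := ler_wpM2l (ltW p0) h; lra.
  rewrite !expr2 in q3 q6 q7 key q1 *.
  lra.
rewrite /c12 sqrrN.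
have h0 : 0 <= c2 by apply: le_trans c2ge; rewrite !mulr_ge0 ?sqr_ge0 //; lra.
have : (1 - p) / 4 * (4 * E ^+ 2 * p ^+ 2 * (1 - p)) <= c1 * c2.
  apply: ler_pM => //; first by lra.
  by rewrite !mulr_ge0 ?sqr_ge0 //; lra.
have -> : (E * p * (1 - p)) ^+ 2 = (1 - p) / 4 * (4 * E ^+ 2 * p ^+ 2 * (1 - p)).
  by rewrite !expr2; field.
by [].
Qed.


Section Hilb.
Local Set Default Proof Using "All".
Variables (R : realType) (X : lmodType R) (ip : X -> X -> R).
Hypothesis Hsym : forall x y, ip x y = ip y x.
Hypothesis Hlin : forall a x y z, ip (a *: x + y) z = a * ip x z + ip y z.
Hypothesis Hpos : forall x, 0 <= ip x x.
Hypothesis Hdef : forall x, ip x x = 0 -> x = 0.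
Variables (S Sinv : X -> X).
Hypothesis HSlin : forall a x y, S (a *: x + y) = a *: S x + S y.
Hypothesis HSadj : forall x y, ip (S x) y = ip x (S y).
Hypothesis HSm : exists m, 0 < m /\ forall x, m * ip x x <= ip (S x) x.
Hypothesis HSinv1 : forall x, S (Sinv x) = x.
Hypothesis HSinv2 : forall x, Sinv (S x) = x.

Lemma ip0l z : ip 0 z = 0.
Proof.
have := Hlin 1 0 0 z; rewrite scale1r addr0 mul1r => H.
have : ip 0 z + ip 0 z = ip 0 z + 0 by rewrite -H addr0.
by move/addrI.
Qed.
Lemma ipDl x y z : ip (x + y) z = ip x z + ip y z.
Proof. by have := Hlin 1 x y z; rewrite scale1r mul1r. Qed.
Lemma ipZl a x z : ip (a *: x) z = a * ip x z.
Proof. by have := Hlin a x 0 z; rewrite addr0 ip0l addr0. Qed.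
Lemma ipNl x z : ip (- x) z = - ip x z.
Proof. by rewrite -scaleN1r ipZl mulN1r. Qed.
Lemma ipBl x y z : ip (x - y) z = ip x z - ip y z.
Proof. by rewrite ipDl ipNl. Qed.
Lemma ip0r z : ip z 0 = 0.
Proof. by rewrite Hsym ip0l. Qed.
Lemma ipDr x y z : ip z (x + y) = ip z x + ip z y.
Proof. by rewrite Hsym ipDl !(Hsym z). Qed.
Lemma ipZr a x z : ip z (a *: x) = a * ip z x.
Proof. by rewrite Hsym ipZl (Hsym z). Qed.
Lemma ipNr x z : ip z (- x) = - ip z x.
Proof. by rewrite Hsym ipNl (Hsym z). Qed.
Lemma ipBr x y z : ip z (x - y) = ip z x - ip z y.
Proof. by rewrite ipDr ipNr. Qed.
Lemma ip_suml I (r : seq I) (P : pred I) (F : I -> X) z :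
  ip (\sum_(i <- r | P i) F i) z = \sum_(i <- r | P i) ip (F i) z.
Proof.
elim/big_rec2: _ => [|i y1 y2 _ <-]; first by rewrite ip0l.
by rewrite ipDl.
Qed.

Lemma S0 : S 0 = 0.
Proof.
have := HSlin 1 0 0; rewrite !scale1r addr0 => H.
have : S 0 + S 0 = S 0 + 0 by rewrite -H addr0.
by move/addrI.
Qed.
Lemma SD x y : S (x + y) = S x + S y.
Proof. by have := HSlin 1 x y; rewrite !scale1r. Qed.
Lemma SZ a x : S (a *: x) = a *: S x.
Proof. by have := HSlin a x 0; rewrite !addr0 S0 addr0. Qed.
Lemma SN x : S (- x) = - S x.
Proof. by rewrite -scaleN1r SZ scaleN1r. Qed.
Lemma SB x y : S (x - y) = S x - S y.
Proof. by rewrite SD SN. Qed.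
Lemma Sinj x y : S x = S y -> x = y.
Proof. by move=> H; rewrite -(HSinv2 x) H HSinv2. Qed.
Lemma SinvD x y : Sinv (x + y) = Sinv x + Sinv y.
Proof. by apply: Sinj; rewrite SD !HSinv1. Qed.
Lemma SinvZ a x : Sinv (a *: x) = a *: Sinv x.
Proof. by apply: Sinj; rewrite SZ !HSinv1. Qed.
Lemma SinvN x : Sinv (- x) = - Sinv x.
Proof. by apply: Sinj; rewrite SN !HSinv1. Qed.
Lemma SinvB x y : Sinv (x - y) = Sinv x - Sinv y.
Proof. by rewrite SinvD SinvN. Qed.

Definition bS u v := ip (S u) v.
Definition nS u := bS u u.
Definition nI d := ip (Sinv d) d.

Lemma bS_sym u v : bS u v = bS v u.
Proof. by rewrite /bS HSadj Hsym. Qed.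
Lemma bSDl u v z : bS (u + v) z = bS u z + bS v z.
Proof. by rewrite /bS SD ipDl. Qed.
Lemma bSZl a u z : bS (a *: u) z = a * bS u z.
Proof. by rewrite /bS SZ ipZl. Qed.
Lemma bSNl u z : bS (- u) z = - bS u z.
Proof. by rewrite /bS SN ipNl. Qed.
Lemma bSBl u v z : bS (u - v) z = bS u z - bS v z.
Proof. by rewrite bSDl bSNl. Qed.
Lemma bSDr u v z : bS z (u + v) = bS z u + bS z v.
Proof. by rewrite /bS ipDr. Qed.
Lemma bSZr a u z : bS z (a *: u) = a * bS z u.
Proof. by rewrite /bS ipZr. Qed.
Lemma bSNr u z : bS z (- u) = - bS z u.
Proof. by rewrite /bS ipNr. Qed.
Lemma bSBr u v z : bS z (u - v) = bS z u - bS z v.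
Proof. by rewrite bSDr bSNr. Qed.

Lemma nS_ge0 u : 0 <= nS u.
Proof.
case: HSm => m [m0 Hm]; apply: le_trans (Hm u).
by rewrite mulr_ge0 // ltW.
Qed.
Lemma nSD u v : nS (u + v) = nS u + 2 * bS u v + nS v.
Proof. rewrite /nS bSDl !bSDr (bS_sym v u); lra. Qed.
Lemma nSB u v : nS (u - v) = nS u - 2 * bS u v + nS v.
Proof. rewrite /nS bSBl !bSBr (bS_sym v u); lra. Qed.
Lemma nS_pol c d : nS (c + d) = nS c - nS d + 2 * bS d (c + d).
Proof. rewrite nSD bSDr (bS_sym d c) /nS; lra. Qed.
Lemma nSZ a u : nS (a *: u) = a ^+ 2 * nS u.
Proof. by rewrite /nS bSZl bSZr mulrA expr2. Qed.
Lemma nSN u : nS (- u) = nS u.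
Proof. by rewrite /nS bSNl bSNr opprK. Qed.

Lemma ip_bS d z : ip d z = bS (Sinv d) z.
Proof. by rewrite /bS HSinv1. Qed.
Lemma nI_nS d : nI d = nS (Sinv d).
Proof. by rewrite /nS /bS HSinv1 Hsym. Qed.
Lemma nI_ge0 d : 0 <= nI d.
Proof. by rewrite nI_nS nS_ge0. Qed.

Lemma young u v t : 0 < t -> 2 * bS u v <= t * nS u + t^-1 * nS v.
Proof.
move=> t0.
have := nS_ge0 (t *: u - v); rewrite nSB nSZ bSZl => H.
have H2 : 0 <= t * (t * nS u - 2 * bS u v) + nS v by lra.
have E : t * nS u + t^-1 * nS v - 2 * bS u v
    = t^-1 * (t * (t * nS u - 2 * bS u v) + nS v).
  by field; rewrite gt_eqF.
rewrite -subr_ge0 E; apply: mulr_ge0 => //.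
by rewrite invr_ge0 ltW.
Qed.

Lemma nSB_le u v : nS (u - v) <= 2 * nS u + 2 * nS v.
Proof. have := nS_ge0 (u + v); rewrite nSD nSB; lra. Qed.

Lemma nI_le0 d : nI d <= 0 -> d = 0.
Proof.
move=> H.
have H0 : nS (Sinv d) = 0 by apply/eqP; rewrite eq_le -nI_nS H nI_ge0.
case: HSm => m [m0 Hm].
have H1 := Hm (Sinv d); rewrite -/(bS _ _) -/(nS _) H0 in H1.
have H2 : ip (Sinv d) (Sinv d) = 0.
  apply/eqP; rewrite eq_le Hpos andbT.
  by rewrite -(pmulr_rle0 _ m0).
by rewrite -(HSinv1 d) (Hdef _ H2) S0.
Qed.

Lemma youngL d z l Rr s : 0 <= l -> 0 <= Rr -> 0 < s -> nI d <= l ^+ 2 * Rr ->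
  2 * ip d z <= s * l * Rr + l / s * nS z.
Proof.
move=> l0 R0 s0; have [->|lp] := eqVneq l 0 => Hd.
  have -> : d = 0 by apply: nI_le0; move: Hd; rewrite expr0n /= mul0r.
  by rewrite ip0l !(mulr0, mul0r) addr0.
have lpos : 0 < l by rewrite lt_def lp l0.
rewrite ip_bS.
have := @young (Sinv d) z (s / l) (divr_gt0 s0 lpos).
rewrite -nI_nS invf_div => H; apply: le_trans H _.
rewrite lerD2r.
have -> : s * l * Rr = s / l * (l ^+ 2 * Rr).
  by rewrite expr2 !mulrA mulfVK ?gt_eqF.
by rewrite ler_wpM2l // divr_ge0 // ltW.
Qed.

Lemma r1 (y a b z : X) : y - a + b - z = (y - z) + (b - a).
Proof. by rewrite addrAC (addrAC y) addrA addrAC. Qed.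
Lemma v1' (a b c : X) : (b - c) + (a - b) = a - c.
Proof. by rewrite addrC addrA subrK. Qed.
Lemma v5 (a b c : X) : (a - c) - (a - b) = b - c.
Proof. by rewrite opprB v1'. Qed.
Lemma v1 (a b c : X) : (a - b) + (b - c) = a - c.
Proof. by rewrite addrA subrK. Qed.
Lemma v2 (a b c : X) : (a - c) - (b - c) = a - b.
Proof. by rewrite opprB addrA subrK. Qed.
Lemma v3 (p : R) (x w z : X) :
  ((1 - p) *: x + p *: w) - z = (1 - p) *: (x - z) + p *: (w - z).
Proof. by rewrite !scalerBr addrACA -opprD -scalerDl subrK scale1r. Qed.
Lemma v4 (p : R) (x w y : X) :
  y - ((1 - p) *: x + p *: w) = (1 - p) *: (y - x) + p *: (y - w).
Proof. by rewrite !scalerBr addrACA -scalerDl subrK scale1r -opprD. Qed.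

Lemma sumQ (N : nat) (Q : 'I_N -> R) (a b c : R) (f g : 'I_N -> R) :
  \sum_i Q i = 1 ->
  \sum_i Q i * (a + b * f i + c * g i) =
  a + b * (\sum_i Q i * f i) + c * (\sum_i Q i * g i).
Proof.
move=> HQ1.
rewrite (eq_bigr (fun i => a * Q i + b * (Q i * f i) + c * (Q i * g i))); last first.
  by move=> i _; ring.
by rewrite !big_split /= -!mulr_sumr HQ1 mulr1.
Qed.

Lemma sumQ2 (N : nat) (Q : 'I_N -> R) (a b : R) (f : 'I_N -> R) :
  \sum_i Q i = 1 ->
  \sum_i Q i * (a + b * f i) = a + b * (\sum_i Q i * f i).
Proof.
move=> HQ1.
rewrite (eq_bigr (fun i => a * Q i + b * (Q i * f i))); last first.
  by move=> i _; ring.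
by rewrite !big_split /= -!mulr_sumr HQ1 mulr1.
Qed.

Lemma psd_form (c1 c2 c12 : R) (u v : X) : 0 < c1 -> c12 ^+ 2 <= c1 * c2 ->
  0 <= c1 * nS u + 2 * c12 * bS u v + c2 * nS v.
Proof.
move=> c10 H.
have e : c1 * (c1 * nS u + 2 * c12 * bS u v + c2 * nS v)
       = nS (c1 *: u + c12 *: v) + (c1 * c2 - c12 ^+ 2) * nS v.
  rewrite nSD !nSZ bSZl bSZr; ring.
have : 0 <= c1 * (c1 * nS u + 2 * c12 * bS u v + c2 * nS v).
  rewrite e addr_ge0 ?nS_ge0 // mulr_ge0 ?nS_ge0 //; lra.
by rewrite pmulr_rge0.
Qed.

Lemma step (N : nat) (Q : 'I_N -> R) (Bo : 'I_N -> X -> X) (Bs C : X -> X)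
  (p s l l' g mu th be k e3 al : R) (xs x w u y u' : X) (r : R)
  (xb := (1 - p) *: x + p *: w) :
  (forall i, 0 <= Q i) -> \sum_i Q i = 1 ->
  (forall z, \sum_i Q i *: Bo i z = Bs z) ->
  (forall a b, \sum_i Q i * nI (Bo i a - Bo i b) <= th ^+ 2 * nS (a - b)) ->
  (forall a b, be^-1 * nI (C a - C b) <= ip (C a - C b) (a - b)) ->
  (forall a b, mu * nS (a - b) <= ip (Bs a - Bs b) (a - b)) ->
  0 < s -> s < 1 -> p = s ^+ 2 ->
  0 <= l -> l <= (1 - s) / 4 -> 0 <= l' -> 0 <= al -> l' + al <= (1 - s) / 4 ->
  0 <= k -> 0 < e3 ->
  4 * k * (1 - p) * (4 + p) + 4 * p * k * l' * (1 + e3) <= p * (1 - s - 4 * (l' + al)) ->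
  0 < g -> g ^+ 2 * th ^+ 2 <= p / 4 -> g * be <= p -> 0 < be -> 0 < mu ->
  k * (4 - 2 * p + l' / e3) <= 2 * g * mu ->
  0 <= r -> nI u <= l ^+ 2 * r -> nI u' <= l' ^+ 2 * nS (y - xb) ->
  0 <= ip (S xb - S y - u' + u - g *: (Bs w - Bs xs) - g *: (C w - C xs)) (y - xs) ->
  (1 + k) * (\sum_i Q i * (nS (y - g *: Sinv (Bo i y) + g *: Sinv (Bo i w) - xs)
              + 2 * ip u' (y - g *: Sinv (Bo i y) + g *: Sinv (Bo i w) - xs))
             + (1 - p) * nS (w - xs) + l' * nS (y - xb))
  <= (1 - p) * nS (x - xs) + nS (w - xs) + 2 * ip u (x - xs) + l * r.
Proof.
move=> HQ0 HQ1 Hunb Hvar HC HBmu s0 s1 ps l0 ll l'0 al0 hl' k0 e0 T3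
  g0 gth gbe be0 mu0 T1 r0 Hu Hu' Hinc.
have p0 : 0 < p by rewrite ps exprn_gt0.
have p1 : p < 1 by rewrite ps expr2; nra.
set ey := y - xs. set ex := x - xs. set ew := w - xs.
set a := y - xb. set W := y - w. set Xv := y - x.
pose G i := Bo i y - Bo i w.
have Ex i : y - g *: Sinv (Bo i y) + g *: Sinv (Bo i w) - xs = ey - g *: Sinv (G i).
  by rewrite /G SinvB scalerBr opprB /ey r1.
under eq_bigr => i _ do rewrite Ex.
set Ny := nS ey. set NW := nS W. set Na := nS a. set Nw := nS ew.
set Nx := nS ex. set NX := nS Xv.
have Ny0 : 0 <= Ny := nS_ge0 _. have NW0 : 0 <= NW := nS_ge0 _.
have Na0 : 0 <= Na := nS_ge0 _. have NX0 : 0 <= NX := nS_ge0 _.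
set SG := \sum_i Q i * nI (G i).
have SG0 : 0 <= SG by apply: sumr_ge0 => i _; rewrite mulr_ge0 ?nI_ge0.
have HSG : SG <= th ^+ 2 * NW by exact: Hvar.
have D2 : g ^+ 2 * SG <= p / 4 * NW.
  apply: le_trans (_ : g ^+ 2 * (th ^+ 2 * NW) <= _).
    by rewrite ler_wpM2l ?sqr_ge0.
  by rewrite mulrA ler_wpM2r.
have F5 i : nS (ey - g *: Sinv (G i)) = Ny + (- (2 * g)) * ip (G i) ey + g ^+ 2 * nI (G i).
  rewrite nSB nSZ -nI_nS bSZr bS_sym -ip_bS /Ny; ring.
have F6 i : 2 * ip u' (ey - g *: Sinv (G i)) <= 2 * ip u' ey + l' * Na + l' * (g ^+ 2 * nI (G i)).
  rewrite ipBr mulrBr.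
  have := youngL _ (- (g *: Sinv (G i))) _ _ _ l'0 Na0 ltr01 Hu'.
  rewrite ipNr nSN nSZ -nI_nS mul1r divr1 => H. lra.
have F7 i : nS (ey - g *: Sinv (G i)) <= 2 * Ny + 2 * (g ^+ 2 * nI (G i)).
  by have := nSB_le ey (g *: Sinv (G i)); rewrite nSZ -nI_nS.
set IBy := ip (Bs y - Bs xs) ey. set IBw := ip (Bs w - Bs xs) ey.
have Hsg : \sum_i Q i * ip (G i) ey = IBy - IBw.
  rewrite /IBy /IBw -ipBl.
  have -> : Bs y - Bs xs - (Bs w - Bs xs) = \sum_i Q i *: G i.
    rewrite /G (eq_bigr (fun i => Q i *: Bo i y - Q i *: Bo i w)); last first.
      by move=> i _; rewrite scalerBr.
    by rewrite sumrB !Hunb v2.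
  by rewrite ip_suml; apply: eq_bigr => i _; rewrite ipZl.
set SX := \sum_i Q i * nS (ey - g *: Sinv (G i)).
set SU := \sum_i Q i * (2 * ip u' (ey - g *: Sinv (G i))).
have D1 : SX = Ny - 2 * g * (IBy - IBw) + g ^+ 2 * SG.
  rewrite /SX (eq_bigr _ (fun i _ => congr1 (fun t => Q i * t) (F5 i))).
  by rewrite sumQ // Hsg -/SG; ring.
have D3 : SU <= 2 * ip u' ey + l' * Na + l' * (g ^+ 2 * SG).
  apply: le_trans (_ : \sum_i Q i * (2 * ip u' ey + l' * Na + l' * g ^+ 2 * nI (G i)) <= _).
    apply: ler_sum => i _; apply: ler_wpM2l => //.
    by have := F6 i; rewrite mulrA.
  by rewrite sumQ2 // /SG mulrA.
have U1 : SX <= 2 * Ny + 2 * (g ^+ 2 * SG).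
  apply: le_trans (_ : \sum_i Q i * (2 * Ny + 2 * g ^+ 2 * nI (G i)) <= _).
    apply: ler_sum => i _; apply: ler_wpM2l => //.
    by have := F7 i; rewrite mulrA.
  by rewrite sumQ2 // /SG mulrA.
set Vey := ip u' ey. set Uey := ip u ey. set Uex := ip u ex.
set ICw := ip (C w - C xs) ey.
set BA := bS a ey.
rewrite -/Vey in D3.
have D4e : ip (S xb - S y - u' + u - g *: (Bs w - Bs xs) - g *: (C w - C xs)) ey
    = (ip (S xb) ey - ip (S y) ey) - Vey + Uey - g * IBw - g * ICw.
  by rewrite !ipBl ipDl ipBl !ipZl (ipBl (S xb)).
have D4 : 0 <= (ip (S xb) ey - ip (S y) ey) - Vey + Uey - g * IBw - g * ICw.
  by rewrite -D4e.
have BAe : BA = ip (S y) ey - ip (S xb) ey by rewrite /BA /bS /a SB ipBl.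
set Nxb := nS (xb - xs).
have D5 : Ny = Nxb - Na + 2 * BA.
  have e : ey = (xb - xs) + a by rewrite /ey /a v1'.
  by rewrite /BA /Ny e nS_pol.
set Nb := nS (x - w).
have D6 : Nxb = (1 - p) * Nx + p * Nw - p * (1 - p) * Nb.
  rewrite /Nxb /xb v3 -/ex -/ew nSD !nSZ bSZl bSZr.
  rewrite /Nb -[x - w](v2 x w xs) -/ex -/ew (nSB ex ew) /Nx /Nw; ring.
have D7 : g * mu * Ny <= g * IBy.
  rewrite -mulrA; apply: ler_wpM2l; [exact: ltW | exact: (HBmu y xs)].
have D8 : - 2 * g * ICw <= p / 2 * NW.
  set v := C w - C xs.
  have e : ey = ew + W by rewrite /ey /ew /W v1'.
  have hC : be^-1 * nI v <= ip v ew by rewrite /v /ew; exact: (HC w xs).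
  have hY := @young (Sinv v) (- W) (2 / be) (divr_gt0 (ltr0Sn _ 1) be0).
  rewrite -nI_nS nSN -/NW -ip_bS ipNr invf_div in hY.
  have h1 := ler_wpM2l (ltW g0) hC.
  have h2 := ler_wpM2l (ltW g0) hY.
  have h3 : g * be <= p := gbe.
  have h4 := ler_wpM2r NW0 h3.
  rewrite /ICw e ipDr.
  lra.
have D9 : 2 * Uey <= 2 * Uex + l * r + l * NX.
  have e : ey = ex + Xv by rewrite /ey /ex /Xv v1'.
  have := youngL _ Xv _ _ _ l0 r0 ltr01 Hu; rewrite mul1r divr1 => H.
  rewrite /Uey e ipDr /Uex /NX; lra.
have U2 : 2 * Vey <= e3 * l' * Na + l' / e3 * Ny.
  exact: (youngL _ ey _ _ _ l'0 Na0 e0 Hu').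
have U3 : Nw <= 2 * Ny + 2 * NW.
  have e : ew = ey - W by rewrite /ew /ey /W v5.
  by rewrite /Nw e; apply: nSB_le.
set bXW := bS Xv W.
have Nae : Na = (1 - p) ^+ 2 * NX + 2 * ((1 - p) * p) * bXW + p ^+ 2 * NW.
  by rewrite /Na /a /xb v4 -/Xv -/W nSD !nSZ bSZl bSZr /bXW /NX /NW; ring.
have Nbe : Nb = NW - 2 * bXW + NX.
  have e : x - w = W - Xv by rewrite /W /Xv v5.
  by rewrite /Nb e nSB bS_sym.
have [c10 cc] := @master R p s l l' k e3 al s0 s1 ps l0 ll l'0 al0 hl' k0 e0 T3.
have PSD := psd_form _ _ _ Xv W c10 cc.
rewrite -/NX -/NW -/bXW in PSD.
have D2l := ler_wpM2l l'0 D2.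
have U3p := ler_wpM2l (_ : 0 <= 1 - p) U3.
have {}U3p := U3p ltac:(lra).
set E' := SX + SU + (1 - p) * Nw + l' * Na.
have Dec : E' <= (1 - p) * Nx + Nw + 2 * Uex + l * r
   - (p * (1 - p) * Nb + (1 - 2 * l') * Na - l * NX - (3 * p / 4 + p * l' / 4) * NW
      + 2 * g * mu * Ny).
  rewrite /E'.
  have gm : 2 * g * mu * Ny <= 2 * g * IBy by lra.
  lra.
have Up : E' <= (4 - 2 * p + l' / e3) * Ny + (p / 2 + p * l' / 4 + 2 * (1 - p)) * NW
                 + (2 + e3) * l' * Na.
  rewrite /E'; lra.
have kUp := ler_wpM2l k0 Up.
have kN := ler_wpM2r Ny0 T1.
under eq_bigr => i _ do rewrite mulrDr.
rewrite big_split /= -/SX -/SU -/E'.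
rewrite Nbe in Dec.
rewrite Nae in Dec kUp.
lra.
Qed.

End Hilb.


Lemma rcons_bij (T : finType) (k : nat) :
  bijective (fun pr : k.-tuple T * T => rcons_tuple pr.1 pr.2).
Proof.
pose h' := fun t : k.+1.-tuple T =>
  (belast_tuple (thead t) (behead_tuple t), last (thead t) (behead t)).
have key (t : k.+1.-tuple T) : rcons (belast (thead t) (behead t)) (last (thead t) (behead t)) = t.
  by rewrite -lastI [in RHS](tuple_eta t).
exists h'.
  move=> [t a] /=.
  have e := key (rcons_tuple t a).
  case: (rcons_inj e) => e1 e2; rewrite /h'; congr pair => //.
  by apply: val_inj.
move=> t; apply: val_inj => /=; exact: key.
Qed.

Lemma expect_step (R : realType) (N : nat) (Q : 'I_N -> R) (p : R) (k : nat)
  (f : seq ('I_N * bool) -> R) :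
  expect Q p k.+1 f =
  expect Q p k (fun h => \sum_(a : 'I_N * bool)
                          (Q a.1 * (if a.2 then p else 1 - p)) * f (rcons h a)).
Proof.
rewrite /expect.
transitivity (\sum_(pr : k.-tuple ('I_N * bool) * ('I_N * bool))
   hist_weight Q p (rcons pr.1 pr.2) * f (rcons pr.1 pr.2)).
  rewrite (reindex (fun pr : k.-tuple ('I_N * bool) * ('I_N * bool) => rcons_tuple pr.1 pr.2)) //.
  by apply: onW_bij; exact: rcons_bij.
rewrite -(pair_bigA _ (fun (t : k.-tuple ('I_N * bool)) (a : 'I_N * bool) =>
   hist_weight Q p (rcons t a) * f (rcons t a))) /=.
apply: eq_bigr => t _; rewrite mulr_sumr; apply: eq_bigr => a _.
by rewrite /hist_weight big_rcons /= -mulrA.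
Qed.

Lemma expect_le (R : realType) (N : nat) (Q : 'I_N -> R) (p : R) (k : nat)
  (f g : seq ('I_N * bool) -> R) :
  (forall i, 0 <= Q i) -> 0 <= p <= 1 ->
  (forall h, size h = k -> f h <= g h) -> expect Q p k f <= expect Q p k g.
Proof.
move=> HQ /andP[p0 p1] H; rewrite /expect; apply: ler_sum => t _.
apply: ler_wpM2l; last by apply: H; rewrite size_tuple.
rewrite /hist_weight; apply: prodr_ge0 => a _; apply: mulr_ge0 => //.
by case: a.2; lra.
Qed.

Lemma expect_scale (R : realType) (N : nat) (Q : 'I_N -> R) (p : R) (k : nat)
  (c : R) (f : seq ('I_N * bool) -> R) :
  c * expect Q p k f = expect Q p k (fun h => c * f h).
Proof.
rewrite /expect mulr_sumr; apply: eq_bigr => t _; ring.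
Qed.

Lemma expect_ext (R : realType) (N : nat) (Q : 'I_N -> R) (p : R) (k : nat)
  (f g : seq ('I_N * bool) -> R) :
  (forall h, size h = k -> f h = g h) -> expect Q p k f = expect Q p k g.
Proof.
move=> H; rewrite /expect; apply: eq_bigr => t _; by rewrite H // size_tuple.
Qed.


Lemma take_rcons_size (T : Type) (h : seq T) a : take (size h) (rcons h a) = h.
Proof. by rewrite -cats1 take_size_cat. Qed.

Lemma sq_le (R : realType) (a b : R) : 0 <= a -> a <= b -> a ^+ 2 <= b ^+ 2.
Proof. by move=> a0 ab; rewrite ler_pXn2r // nnegrE //; apply: le_trans ab. Qed.


Theorem theorem4p2
  (R : realType) (X : lmodType R) (ip : X -> X -> R)
  (HX : separable_hilbert ip)
  (* (A2) preamble: S in P(X), together with its inverse S^{-1} *)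
  (S Sinv : X -> X) (HS : strongly_pos_op ip S)
  (HSinv1 : forall x, S (Sinv x) = x) (HSinv2 : forall x, Sinv (S x) = x)
  (* (i) A maximally monotone (A x u  <->  u \in A x) *)
  (A : X -> X -> Prop) (HA : maximally_monotone ip A)
  (* (ii) B = sum_i B_i, stochastic oracle B_xi, xi ~ Q *)
  (N : nat) (Bi : 'I_N -> X -> X)
  (HBi : forall i, monotone_op ip (Bi i) /\ lipschitz_op ip (Bi i))
  (Q : 'I_N -> R) (HQ0 : forall i, 0 <= Q i) (HQ1 : \sum_i Q i = 1)
  (Bo : 'I_N -> X -> X)
  (Hunb : forall x, \sum_i Q i *: Bo i x = \sum_i Bi i x)
  (theta : R) (Htheta : 0 < theta)
  (Hvar : forall u v, \sum_i Q i * (normS ip Sinv (Bo i u - Bo i v)) ^+ 2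
                      <= theta ^+ 2 * (normS ip S (u - v)) ^+ 2)
  (* (iii) C is beta^{-1}-cocoercive w.r.t. S *)
  (C : X -> X) (beta : R) (Hbeta : 0 < beta) (HC : cocoercive_wrt ip S Sinv C beta)
  (* additional: B is mu-strongly monotone w.r.t. S *)
  (mu : R) (Hmu : 0 < mu)
  (HBmu : strongly_monotone_wrt ip S (fun x => \sum_i Bi i x) mu)
  (* (iv) x* is the solution: 0 \in A x* + B x* + C x* *)
  (xs : X) (Hxs : A xs (- (\sum_i Bi i xs + C xs)))
  (* parameters *)
  (p L eps3 alpha : R) (Hp : 0 < p < 1) (HL : (3 - p) / 2 <= L)
  (Heps3 : 0 < eps3) (Halpha : 0 < alpha)
  (* (v) the metric operators M_k, with L_k in [0,1) *)
  (M : nat -> X -> X) (Lk : nat -> R)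
  (HLk : forall k, 0 <= Lk k < 1)
  (HLka : forall k, Lk k + alpha <= (1 - Num.sqrt p) / 4)
  (Lbar : R) (HLbar1 : forall k, Lk k <= Lbar)
  (HLbar2 : forall b, (forall k, Lk k <= b) -> Lbar <= b)
  (gamma : R) (Hgamma : gamma = gamma_def p theta beta alpha Lbar)
  (HM : forall k, lipschitz_wrt ip S Sinv (fun z => gamma *: M k z - S z) (Lk k))
  (* the constant c *)
  (c : R) (Hc0 : 0 <= c)
  (Hc : forall k, (1 <= k)%N -> le_ck c gamma mu L eps3 alpha p (Lk k) (Lk k.-1))
  (* the iterates of SVR-NFBHF-M with lambda = 1 - p, as functions of the
     history h = [:: (xi_0, coin_0); ...; (xi_{k-1}, coin_{k-1})] *)
  (x w u y : nat -> seq ('I_N * bool) -> X)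
  (Hinit : w 0%N [::] = x 0%N [::])
  (Hy : forall k h, size h = k ->
     let xbar := (1 - p) *: x k h + p *: w k h in
     A (y k h) (M k xbar - (\sum_i Bi i (w k h) + C (w k h)) + gamma^-1 *: u k h
                - M k (y k h)))
  (Hu : forall k h a, size h = k ->
     let xbar := (1 - p) *: x k h + p *: w k h in
     u k.+1 (rcons h a) = (gamma *: M k (y k h) - S (y k h))
                          - (gamma *: M k xbar - S xbar))
  (Hx : forall k h a, size h = k ->
     x k.+1 (rcons h a) = y k h - gamma *: Sinv (Bo a.1 (y k h))
                                + gamma *: Sinv (Bo a.1 (w k h)))
  (Hw : forall k h a, size h = k ->
     w k.+1 (rcons h a) = if a.2 then x k.+1 (rcons h a) else w k h) :
  let xbar0 := (1 - p) *: x 0%N [::] + p *: w 0%N [::] in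
  let d1 := fun h => 2 * ip (u 1%N h) (x 1%N h - xs)
                     + Lk 0%N * (normS ip S (y 0%N [::] - xbar0)) ^+ 2 in
  forall k, (1 <= k)%N ->
    (1 - p - Lk k) * expect Q p k.+1 (fun h => (normS ip S (x k.+1 h - xs)) ^+ 2)
    <= expect Q p 1 (fun h => (1 - p) * (normS ip S (x 1%N h - xs)) ^+ 2
                              + (normS ip S (w 1%N h - xs)) ^+ 2 + d1 h)
       / (1 + c / (2 * L)) ^+ k.
Proof.
move=> xbar0 d1.
case: HX => Hsym Hlin Hpos [Hdef _] _.
case: HS => HSlin _ HSadj HSm.
case: HA => Hmono _.
pose nS' := nS R X ip S. pose nI' := nI R X ip Sinv.
have nSg : forall z, 0 <= nS' z := @nS_ge0 R X ip Hsym Hlin Hpos Hdef S Sinv HSlin HSadj HSm HSinv1 HSinv2.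
have nIg : forall z, 0 <= nI' z := @nI_ge0 R X ip Hsym Hlin Hpos Hdef S Sinv HSlin HSadj HSm HSinv1 HSinv2.
have nSe z : normS ip S z ^+ 2 = nS' z by rewrite /normS sqr_sqrtr // nSg.
have nIe z : normS ip Sinv z ^+ 2 = nI' z by rewrite /normS sqr_sqrtr // nIg.

have stp := @step R X ip Hsym Hlin Hpos Hdef S Sinv HSlin HSadj HSm HSinv1 HSinv2.
have yL := @youngL R X ip Hsym Hlin Hpos Hdef S Sinv HSlin HSadj HSm HSinv1 HSinv2.
case/andP: Hp => p0 p1.
set s := Num.sqrt p.
have s0 : 0 < s by rewrite sqrtr_gt0.
have ps : p = s ^+ 2 by rewrite sqr_sqrtr // ltW.
have s1 : s < 1.
  have : s ^+ 2 < 1 ^+ 2 by rewrite -ps expr1n.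
  by rewrite ltr_pXn2r // nnegrE ltW.
have L0 : 0 < L by apply: lt_le_trans HL; lra.
have Lbar0 : 0 <= Lbar by apply: le_trans (HLbar1 0%N); case/andP: (HLk 0%N).
have gA : gamma <= s / (2 * theta) /\ gamma <= p / beta /\ 0 < gamma.
  have hA : 0 < s / (2 * theta) by rewrite divr_gt0 // mulr_gt0.
  have hB : 0 < p / beta by rewrite divr_gt0.
  set g1 := Num.min (s / (2 * theta)) (p / beta).
  have h1 : g1 <= s / (2 * theta) by rewrite /g1 ge_min lexx.
  have h2 : g1 <= p / beta by rewrite /g1 ge_min lexx orbT.
  have h3 : 0 < g1 by rewrite /g1 lt_min hA hB.
  rewrite Hgamma /gamma_def -/s -/g1; case: eqP => HL0.
    by split => //; split.
  have hC : 0 < alpha / (Lbar * theta).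
    rewrite divr_gt0 // mulr_gt0 // lt_def Lbar0 andbT; exact/eqP.
  have h4 : Num.min g1 (alpha / (Lbar * theta)) <= g1 by rewrite ge_min lexx.
  split; first exact: le_trans h4 h1.
  split; first exact: le_trans h4 h2.
  by rewrite lt_min h3 hC.
case: gA => gs [gb g0].
have gth : gamma ^+ 2 * theta ^+ 2 <= p / 4.
  have : gamma * theta <= s / 2.
    have := ler_wpM2r (ltW Htheta) gs.
    have -> : s / (2 * theta) * theta = s / 2 by field; rewrite gt_eqF.
    by [].
  move=> h; rewrite -exprMn ps.
  have : (gamma * theta) ^+ 2 <= (s / 2) ^+ 2 by apply: sq_le => //; rewrite mulr_ge0 // ltW.
  by rewrite expr_div_n; have -> : (2:R) ^+ 2 = 4 by rewrite expr2; lra.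
have gbe : gamma * beta <= p.
  by have := ler_wpM2r (ltW Hbeta) gb; rewrite mulfVK ?gt_eqF.
pose kap := c / (2 * L).
have kap0 : 0 <= kap by rewrite /kap divr_ge0 // mulr_ge0 // ltW.
have Hk k : (1 <= k)%N ->
    kap * (4 - 2 * p + Lk k / eps3) <= 2 * gamma * mu /\
    4 * kap * (1 - p) * (4 + p) + 4 * p * kap * Lk k * (1 + eps3)
       <= p * (1 - s - 4 * (Lk k + alpha)).
  move=> hk; case: (Hc k hk) => T1 _ T3.
  have lk0 : 0 <= Lk k by case/andP: (HLk k).
  split.
    have D0 : 0 < 1 + Lk k / (2 * L * eps3).
      have t0 : 0 <= Lk k / (2 * L * eps3).
        by rewrite divr_ge0 // !mulr_ge0 // ltW.
      lra.
    move: T1; rewrite ler_pdivlMr // => T1.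
    have e : 2 * (c * (1 + Lk k / (2 * L * eps3))) - kap * (4 - 2 * p + Lk k / eps3)
             = kap * ((4 * L - 4 + 2 * p) + Lk k / eps3).
      by rewrite /kap; field; rewrite !gt_eqF.
    have : 0 <= kap * ((4 * L - 4 + 2 * p) + Lk k / eps3).
      by apply: mulr_ge0 => //; apply: addr_ge0; [lra | rewrite divr_ge0 // ltW].
    rewrite -e; lra.
  have D0 : 0 < 2 * (1 - p) * (4 + p) + 2 * p * Lk k * (eps3 + 1).
    have t1 : 0 <= 2 * p * Lk k * (eps3 + 1) by rewrite !mulr_ge0 //; lra.
    have t2 : 0 < 2 * (1 - p) * (4 + p) by rewrite !mulr_gt0 //; lra.
    lra.
  move: T3; rewrite ler_pdivlMr // => T3.
  have e : 4 * kap * (1 - p) * (4 + p) + 4 * p * kap * Lk k * (1 + eps3)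
           = (c * (2 * (1 - p) * (4 + p) + 2 * p * Lk k * (eps3 + 1))) / L.
    by rewrite /kap; field; rewrite gt_eqF.
  rewrite e ler_pdivrMr //.
  by move: T3; rewrite -/s; lra.
pose xbar j h := (1 - p) *: x j h + p *: w j h.
pose r j h := nS' (y j.-1 (take j.-1 h) - xbar j.-1 (take j.-1 h)).
pose Phi j h := (1 - p) * nS' (x j h - xs) + nS' (w j h - xs)
                + 2 * ip (u j h) (x j h - xs) + Lk j.-1 * r j h.
have rge0 j h : 0 <= r j h by apply: nSg.
have ubound j h : (1 <= j)%N -> size h = j -> nI' (u j h) <= Lk j.-1 ^+ 2 * r j h.
  case: j => // j _; case/lastP: h => [//|h a]; rewrite size_rcons => -[sh].
  rewrite /r /= -sh take_rcons_size sh.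
  move: (Hu j h a sh) => /= ->.
  have H := HM j (y j h) (xbar j h); rewrite /= in H.
  have := @sq_le R _ _ (sqrtr_ge0 _) H.
  by rewrite exprMn nSe nIe.
have lowb j h : (1 <= j)%N -> size h = j ->
    (1 - p - Lk j.-1) * nS' (x j h - xs) <= Phi j h.
  move=> hj sh.
  have lj : 0 <= Lk j.-1 by case/andP: (HLk j.-1).
  have H := yL (u j h) (- (x j h - xs)) (Lk j.-1) (r j h) 1 lj (rge0 j h) ltr01 (ubound j h hj sh).
  rewrite (@ipNr R X ip Hsym Hlin Hpos Hdef S Sinv HSlin HSadj HSm HSinv1 HSinv2) (@nSN R X ip Hsym Hlin Hpos Hdef S Sinv HSlin HSadj HSm HSinv1 HSinv2) divr1 mul1r in H.
  have := nSg (w j h - xs); rewrite /Phi -/nS' in H *; lra.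
have stepk k h : (1 <= k)%N -> size h = k ->
    (1 + kap) * (\sum_(a : 'I_N * bool) (Q a.1 * (if a.2 then p else 1 - p))
                  * Phi k.+1 (rcons h a)) <= Phi k h.
  move=> hk sh.
  set xk := x k h. set wk := w k h. set uk := u k h. set yk := y k h.
  set xb := xbar k h.
  set u'0 := (gamma *: M k yk - S yk) - (gamma *: M k xb - S xb).
  pose x' (i : 'I_N) := yk - gamma *: Sinv (Bo i yk) + gamma *: Sinv (Bo i wk).
  have Ph i (b : bool) : Phi k.+1 (rcons h (i, b)) =
      (1 - p) * nS' (x' i - xs) + nS' ((if b then x' i else wk) - xs)
      + 2 * ip u'0 (x' i - xs) + Lk k * nS' (yk - xb).
    have tk : take k (rcons h (i, b)) = h by rewrite -sh take_rcons_size.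
    rewrite /Phi /r /= tk.
    rewrite (Hw k h (i, b) sh) (Hx k h (i, b) sh) /=.
    by move: (Hu k h (i, b) sh) => /= ->.
  have E : \sum_(a : 'I_N * bool) (Q a.1 * (if a.2 then p else 1 - p)) * Phi k.+1 (rcons h a)
      = \sum_i Q i * (nS' (x' i - xs) + 2 * ip u'0 (x' i - xs))
        + (1 - p) * nS' (wk - xs) + Lk k * nS' (yk - xb).
    rewrite (eq_bigr (fun a : 'I_N * bool => (Q a.1 * (if a.2 then p else 1 - p))
       * Phi k.+1 (rcons h (a.1, a.2)))); last by case.
    rewrite -(pair_bigA _ (fun (i : 'I_N) (b : bool) =>
       (Q i * (if b then p else 1 - p)) * Phi k.+1 (rcons h (i, b)))) /=.
    rewrite (eq_bigr (fun i => Q i * (nS' (x' i - xs) + 2 * ip u'0 (x' i - xs))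
          + Q i * ((1 - p) * nS' (wk - xs) + Lk k * nS' (yk - xb)))); last first.
      by move=> i _; rewrite big_bool /= !Ph; ring.
    by rewrite big_split /= -mulr_suml HQ1 mul1r addrA.
  rewrite E.
  have lk0 : 0 <= Lk k by case/andP: (HLk k).
  have lkm0 : 0 <= Lk k.-1 by case/andP: (HLk k.-1).
  have [T1 T3] := Hk k hk.
  have lkm : Lk k.-1 <= (1 - s) / 4 by have := HLka k.-1; rewrite -/s; lra.
  have lka : Lk k + alpha <= (1 - s) / 4 by have := HLka k; rewrite -/s.
  have Hvar' a b : \sum_i Q i * nI' (Bo i a - Bo i b) <= theta ^+ 2 * nS' (a - b).
    by have := Hvar a b; rewrite nSe; under eq_bigr => i _ do rewrite nIe.
  have HC' a b : beta^-1 * nI' (C a - C b) <= ip (C a - C b) (a - b).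
    by have := HC a b; rewrite nIe.
  have HBmu' a b : mu * nS' (a - b) <=
      ip ((fun z => \sum_i Bi i z) a - (fun z => \sum_i Bi i z) b) (a - b).
    by have := HBmu a b; rewrite nSe.
  have Hu' : nI' u'0 <= Lk k ^+ 2 * nS' (yk - xb).
    have H := HM k yk xb; rewrite /= in H.
    have := @sq_le R _ _ (sqrtr_ge0 _) H.
    by rewrite exprMn nSe nIe.
  have Hinc : 0 <= ip (S xb - S yk - u'0 + uk
         - gamma *: ((fun z => \sum_i Bi i z) wk - (fun z => \sum_i Bi i z) xs)
         - gamma *: (C wk - C xs)) (yk - xs).
    have Hm := Hmono _ _ _ _ (Hy k h sh) Hxs.
    rewrite /= -/xk -/wk -/yk -/uk -/xb in Hm.
    have e : ip (S xb - S yk - u'0 + uk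
         - gamma *: ((fun z => \sum_i Bi i z) wk - (fun z => \sum_i Bi i z) xs)
         - gamma *: (C wk - C xs)) (yk - xs)
       = gamma * ip (M k xb - (\sum_i Bi i wk + C wk) + gamma^-1 *: uk - M k yk
                     - - (\sum_i Bi i xs + C xs)) (yk - xs).
      rewrite /u'0 /=.
      rewrite !((@ipBl R X ip Hsym Hlin Hpos Hdef S Sinv HSlin HSadj HSm HSinv1 HSinv2), (@ipDl R X ip Hsym Hlin Hpos Hdef S Sinv HSlin HSadj HSm HSinv1 HSinv2), (@ipNl R X ip Hsym Hlin Hpos Hdef S Sinv HSlin HSadj HSm HSinv1 HSinv2), (@ipZl R X ip Hsym Hlin Hpos Hdef S Sinv HSlin HSadj HSm HSinv1 HSinv2)).
      by field; rewrite gt_eqF.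
    by rewrite e mulr_ge0 // ltW.
  have := stp N Q Bo (fun z => \sum_i Bi i z) C p s (Lk k.-1) (Lk k) gamma mu theta beta
     kap eps3 alpha xs xk wk uk yk u'0 (r k h)
     HQ0 HQ1 Hunb Hvar' HC' HBmu' s0 s1 ps lkm0 lkm lk0 (ltW Halpha) lka kap0 Heps3 T3
     g0 gth gbe Hbeta Hmu T1 (rge0 k h) (ubound k h hk sh) Hu' Hinc.
  by rewrite /Phi.
have kp1 : 0 < 1 + kap by lra.
have p01 : 0 <= p <= 1 by apply/andP; split; lra.
have rec n : (1 + kap) ^+ n * expect Q p n.+1 (Phi n.+1) <= expect Q p 1 (Phi 1%N).
  elim: n => [|n IH]; first by rewrite expr0 mul1r.
  rewrite expect_step.
  have H : expect Q p n.+1 (fun h => \sum_(a : 'I_N * bool)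
              (Q a.1 * (if a.2 then p else 1 - p)) * Phi n.+2 (rcons h a))
         <= expect Q p n.+1 (fun h => (1 + kap)^-1 * Phi n.+1 h).
    apply: expect_le => // h sh.
    have := stepk n.+1 h (ltn0Sn _) sh.
    by rewrite mulrC -ler_pdivlMr // mulrC.
  rewrite -expect_scale in H.
  apply: le_trans IH.
  rewrite exprSr -mulrA.
  apply: ler_wpM2l; first by rewrite exprn_ge0 // ltW.
  have := ler_wpM2l (ltW kp1) H.
  by rewrite mulrA mulfV ?gt_eqF // mul1r.
move=> k hk.
have lowk : (1 - p - Lk k) * expect Q p k.+1 (fun h => normS ip S (x k.+1 h - xs) ^+ 2)
            <= expect Q p k.+1 (Phi k.+1).
  rewrite expect_scale; apply: expect_le => // h sh.
  rewrite nSe; exact: (lowb k.+1 h (ltn0Sn _) sh).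
have e1 : expect Q p 1 (Phi 1%N) =
   expect Q p 1 (fun h => (1 - p) * normS ip S (x 1%N h - xs) ^+ 2
                              + normS ip S (w 1%N h - xs) ^+ 2 + d1 h).
  apply: expect_ext => h sh.
  by rewrite /Phi /d1 /r /= take0 !nSe addrA.
rewrite -e1.
apply: le_trans lowk _.
rewrite ler_pdivlMr ?exprn_gt0 // mulrC.
exact: rec.
Qed.
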